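(* Let $X_1\in\mathbb{R}^{n_1\times d}$, $X_2\in\mathbb{R}^{n_2\times d}$ and let $P_1=I-X_1^+X_1$, $P_2=I-X_2^+X_2$. Then for every integer $n\ge1$, $$\big\|(I-P_1)(P_2P_1)^n\big\|^2=\max_i\Big\{(\cos^2\theta_i)^{2n-1}(1-\cos^2\theta_i)\Big\},$$ where the maximum ranges over the non-zero principal angles $\theta_i\in(0,\pi/2]$ between $\mathrm{range}(X_1^\top)$ and $\mathrm{range}(X_2^\top)$ (equivalently between $\ker X_1$ and $\ker X_2$), with a maximum over the empty set being $0$.
   Context: $A^+$ is the Moore–Penrose pseudoinverse and $\|\cdot\|$ the spectral norm; $P_m$ is the orthogonal projection onto $\ker X_m$. Principal angles: for data matrices $X_1,X_2$ let $r=\min(\operatorname{rank}X_1,\operatorname{rank}X_2)$. The principal angles $0\le\theta_1\le\dots\le\theta_r\le\pi/2$ between $\mathrm{range}(X_1^\top)$ and $\mathrm{range}(X_2^\top)$ are defined recursively by $\cos\theta_i=|u_i^\top v_i|$, where $(u_i,v_i)$ maximizes $|u^\top v|$ over unit vectors $u\in\mathrm{range}(X_1^\top)$, $v\in\mathrm{range}(X_2^\top)$ with $u\perp u_j$, $v\perp v_j$ for all $j<i$. The non-zero principal angles between $\ker X_1$ and $\ker X_2$ (defined analogously) coincide with the non-zero ones between the row spaces. *)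

(* Defs.v *)
From HB Require Import structures.
From mathcomp Require Import all_boot all_order all_algebra.
From mathcomp Require Import all_classical all_reals.
From mathcomp Require Import trigo.
Set Implicit Arguments. Unset Strict Implicit. Unset Printing Implicit Defensive.
Import Order.TTheory GRing.Theory Num.Theory.
Local Open Scope ring_scope.
Local Open Scope classical_set_scope.

Definition dotc {R : realType} {d : nat} (x y : 'cV[R]_d) : R := (x^T *m y) 0 0.
Definition vnorm {R : realType} {d : nat} (x : 'cV[R]_d) : R := Num.sqrt (dotc x x).

Definition specnorm {R : realType} {m d : nat} (A : 'M[R]_(m, d)) : R :=
  sup [set y | exists x : 'cV[R]_d, vnorm x <= 1 /\ y = vnorm (A *m x)].

(* Xp is the Moore-Penrose pseudoinverse of X (the four Penrose equations,
   which characterize it uniquely). *)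
Definition is_pinv {R : realType} {n d : nat} (X : 'M[R]_(n, d)) (Xp : 'M[R]_(d, n)) :=
  [/\ X *m Xp *m X = X, Xp *m X *m Xp = Xp,
      (X *m Xp)^T = X *m Xp & (Xp *m X)^T = Xp *m X].

Definition mxpow {R : realType} {d : nat} (A : 'M[R]_d) (k : nat) : 'M[R]_d :=
  iter k (fun B => A *m B) 1%:M.

(* u, v : 'I_r -> R^d (r = min(rank X1, rank X2)) are principal vector pairs
   between range(X1^T) and range(X2^T), as in the recursive definition:
   u_i in range(X1^T), v_i in range(X2^T) unit vectors, u_i ⟂ u_j, v_i ⟂ v_j
   for j < i, and (u_i, v_i) maximizes |u^T v| among all such pairs. *)
Definition principal_vectors {R : realType} {n1 n2 d : nat}
  (X1 : 'M[R]_(n1, d)) (X2 : 'M[R]_(n2, d))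
  (u v : 'I_(minn (\rank X1) (\rank X2)) -> 'cV[R]_d) : Prop :=
  forall i,
    [/\ ((u i)^T <= X1)%MS, ((v i)^T <= X2)%MS, vnorm (u i) = 1 /\ vnorm (v i) = 1,
        (forall j : 'I_(minn (\rank X1) (\rank X2)), (j < i)%N -> dotc (u i) (u j) = 0 /\ dotc (v i) (v j) = 0)
      & forall x y : 'cV[R]_d,
          (x^T <= X1)%MS -> (y^T <= X2)%MS -> vnorm x = 1 -> vnorm y = 1 ->
          (forall j : 'I_(minn (\rank X1) (\rank X2)), (j < i)%N -> dotc x (u j) = 0 /\ dotc y (v j) = 0) ->
          (`|dotc x y| <= `|dotc (u i) (v i)|) ].

Definition principal_angle {R : realType} {d r : nat}
  (u v : 'I_r -> 'cV[R]_d) (i : 'I_r) : R := acos `|dotc (u i) (v i)|.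
Arguments principal_vectors {R n1 n2 d} X1 X2 u v.

(* Main.v *)
Require Import Defs.
From HB Require Import structures.
From mathcomp Require Import all_boot all_order all_algebra.
From mathcomp Require Import all_classical all_reals.
From mathcomp Require Import trigo.
From mathcomp Require Import ring lra zify.
Import Order.TTheory GRing.Theory Num.Theory.
Local Open Scope ring_scope.

Section Dot.
Variables (R : realType) (d : nat).
Implicit Types x y z : 'cV[R]_d.

Lemma dotcE x y : dotc x y = \sum_k x k 0 * y k 0.
Proof. by rewrite /dotc mxE; apply: eq_bigr => k _; rewrite mxE. Qed.

Lemma dotcC x y : dotc x y = dotc y x.
Proof. by rewrite !dotcE; apply: eq_bigr => k _; rewrite mulrC. Qed.

Lemma dotcDl x y z : dotc (x + y) z = dotc x z + dotc y z.
Proof. by rewrite !dotcE -big_split; apply: eq_bigr => k _; rewrite mxE mulrDl. Qed.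

Lemma dotcZl a x y : dotc (a *: x) y = a * dotc x y.
Proof. by rewrite !dotcE mulr_sumr; apply: eq_bigr => k _; rewrite mxE mulrA. Qed.

Lemma dotcNl x y : dotc (- x) y = - dotc x y.
Proof. by rewrite -scaleN1r dotcZl mulN1r. Qed.

Lemma dotcBl x y z : dotc (x - y) z = dotc x z - dotc y z.
Proof. by rewrite dotcDl dotcNl. Qed.

Lemma dotcDr x y z : dotc x (y + z) = dotc x y + dotc x z.
Proof. by rewrite dotcC dotcDl !(dotcC x). Qed.

Lemma dotcZr a x y : dotc x (a *: y) = a * dotc x y.
Proof. by rewrite dotcC dotcZl dotcC. Qed.

Lemma dotcBr x y z : dotc x (y - z) = dotc x y - dotc x z.
Proof. by rewrite dotcC dotcBl !(dotcC x). Qed.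

Lemma dotc0l x : dotc 0 x = 0.
Proof. by rewrite -(scale0r 0) dotcZl mul0r. Qed.

Lemma dotc0r x : dotc x 0 = 0.
Proof. by rewrite dotcC dotc0l. Qed.

Lemma dotc_suml I (r : seq I) (P : pred I) (F : I -> 'cV[R]_d) y :
  dotc (\sum_(i <- r | P i) F i) y = \sum_(i <- r | P i) dotc (F i) y.
Proof.
apply: (big_ind2 (fun a b => dotc a y = b)) => //; first exact: dotc0l.
by move=> a b c e <- <-; rewrite dotcDl.
Qed.

Lemma dotc_ge0 x : 0 <= dotc x x.
Proof. by rewrite dotcE; apply: sumr_ge0 => k _; rewrite -expr2 sqr_ge0. Qed.

Lemma dotc_eq0 x : dotc x x = 0 -> x = 0.
Proof.
rewrite dotcE => /eqP; rewrite psumr_eq0 => [H|k _]; last by rewrite -expr2 sqr_ge0.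
apply/matrixP => i j; rewrite !mxE (ord1 j).
by move/allP: H => /(_ i (mem_index_enum _)); rewrite -expr2 sqrf_eq0 => /eqP.
Qed.

Lemma dotc_mulmx (M : 'M[R]_d) x y : dotc (M *m x) y = dotc x (M^T *m y).
Proof. by rewrite /dotc trmx_mul mulmxA. Qed.

Lemma CS x y : dotc x y ^+ 2 <= dotc x x * dotc y y.
Proof.
have [y0|yn0] := eqVneq (dotc y y) 0.
  by rewrite y0 (dotc_eq0 _ y0) dotc0r expr0n mulr0.
have yp : 0 < dotc y y by rewrite lt0r yn0 dotc_ge0.
pose t := dotc x y / dotc y y.
have := dotc_ge0 (x - t *: y).
rewrite dotcBl !dotcBr !dotcZl !dotcZr (dotcC y x) /t.
set a := dotc x x; set b := dotc x y; set c := dotc y y => H.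
have E : a - b / c * b - (b / c * b - b / c * (b / c * c)) = (a * c - b ^+ 2) / c.
  by field.
rewrite E pmulr_lge0 ?invr_gt0 // subr_ge0 in H.
by [].

Qed.

Lemma vnorm1 x : vnorm x = 1 -> dotc x x = 1.
Proof. by move=> H; rewrite -(sqr_sqrtr (dotc_ge0 x)) -/(vnorm x) H expr1n. Qed.

End Dot.
Arguments dotcE {R d}. Arguments dotcC {R d}. Arguments dotcDl {R d}.
Arguments dotcZl {R d}. Arguments dotcNl {R d}. Arguments dotcBl {R d}.
Arguments dotcDr {R d}. Arguments dotcZr {R d}. Arguments dotcBr {R d}.
Arguments dotc0l {R d}. Arguments dotc0r {R d}. Arguments dotc_suml {R d}.
Arguments dotc_ge0 {R d}. Arguments dotc_eq0 {R d}. Arguments dotc_mulmx {R d}.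
Arguments CS {R d}. Arguments vnorm1 {R d}.

Section Proj.
Variables (R : realType) (m d : nat) (X : 'M[R]_(m, d)) (Xp : 'M[R]_(d, m)).
Hypothesis HX : is_pinv X Xp.
Let Q := Xp *m X.

Lemma Q_sym : Q^T = Q.
Proof. by case: HX. Qed.

Lemma Q_idem : Q *m Q = Q.
Proof. by case: HX => _ H2 _ _; rewrite /Q mulmxA H2. Qed.

Lemma Q_XT : Q *m X^T = X^T.
Proof.
case: HX => H1 _ _ H4.
by rewrite -Q_sym -trmx_mul /Q mulmxA H1.
Qed.

Lemma Q_fix (x : 'cV[R]_d) : (x^T <= X)%MS -> Q *m x = x.
Proof.
case/submxP => w /(congr1 trmx); rewrite trmxK trmx_mul => ->.
by rewrite mulmxA Q_XT.
Qed.

Lemma Q_in (x : 'cV[R]_d) : ((Q *m x)^T <= X)%MS.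
Proof. by rewrite trmx_mul Q_sym /Q mulmxA submxMl. Qed.

Lemma Q_dot (x y : 'cV[R]_d) : dotc (Q *m x) y = dotc x (Q *m y).
Proof. by rewrite dotc_mulmx Q_sym. Qed.

End Proj.
Arguments Q_sym {R m d X Xp}. Arguments Q_idem {R m d X Xp}. Arguments Q_XT {R m d X Xp}.
Arguments Q_fix {R m d X Xp}. Arguments Q_in {R m d X Xp}. Arguments Q_dot {R m d X Xp}.

Definition colsmx {R : realType} {d r : nat} (f : 'I_r -> 'cV[R]_d) : 'M[R]_(d, r) :=
  \matrix_(k, i) f i k 0.

Section Cols.
Variables (R : realType) (d r : nat).
Implicit Types f g : 'I_r -> 'cV[R]_d.

Lemma colsmx_mulr f (y : 'cV[R]_r) : colsmx f *m y = \sum_i y i 0 *: f i.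
Proof.
apply/matrixP => k l; rewrite (ord1 l) !mxE summxE; apply: eq_bigr => i _.
by rewrite !mxE mulrC.
Qed.

Lemma colsmx_trmul f (z : 'cV[R]_d) : (colsmx f)^T *m z = \col_i dotc (f i) z.
Proof.
apply/matrixP => i l; rewrite (ord1 l) !mxE dotcE; apply: eq_bigr => k _.
by rewrite !mxE.
Qed.

Lemma colsmx_mull (M : 'M[R]_d) f : M *m colsmx f = colsmx (fun i => M *m f i).
Proof.
apply/matrixP => k i; rewrite !mxE; apply: eq_bigr => l _; by rewrite !mxE.
Qed.

Lemma colsmx_gram f : (colsmx f)^T *m colsmx f = \matrix_(i, j) dotc (f i) (f j).
Proof.
apply/matrixP => i j; rewrite !mxE dotcE; apply: eq_bigr => k _; by rewrite !mxE.
Qed.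

Lemma row_colsmxT f i : row i (colsmx f)^T = (f i)^T.
Proof. by apply/matrixP => l k; rewrite !mxE (ord1 l). Qed.

Lemma colsmx_outer f g : colsmx f *m (colsmx g)^T = \sum_i f i *m (g i)^T.
Proof.
apply/matrixP => k l; rewrite !mxE summxE; apply: eq_bigr => i _.
by rewrite !mxE big_ord1 !mxE.
Qed.

End Cols.

Lemma span_proj (R : realType) (m d r : nat) (X : 'M[R]_(m, d)) (Xp : 'M[R]_(d, m))
  (W : 'I_r -> 'cV[R]_d) :
  is_pinv X Xp -> (\rank X <= r)%N -> (forall i, ((W i)^T <= X)%MS) ->
  (forall i j, dotc (W i) (W j) = (i == j)%:R) ->
  Xp *m X = colsmx W *m (colsmx W)^T.
Proof.
move=> HX rX Win Worth.
set Wm := colsmx W.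
have G : Wm^T *m Wm = 1%:M.
  by rewrite colsmx_gram; apply/matrixP => i j; rewrite !mxE Worth.
have sub : (Wm^T <= X)%MS by apply/row_subP => i; rewrite row_colsmxT.
have rk : (\rank X <= \rank Wm^T)%N.
  by apply: (leq_trans rX); rewrite -{1}(mxrank1 R r) -G mxrankM_maxl.
have : (X <= Wm^T)%MS.
  have [_ <-] := mxrank_leqif_sup sub; by rewrite eqn_leq rk mxrankS.
case/submxP => K EK.
have QW : (Xp *m X) *m Wm = Wm.
  by rewrite colsmx_mull; congr colsmx; apply/funext => i; rewrite (Q_fix HX _ (Win i)).
have EQ : Xp *m X = (Xp *m K) *m Wm^T by rewrite -mulmxA -EK.
 move: QW; rewrite EQ -mulmxA G mulmx1 => ->.
by [].
Qed.

Lemma R0 (R : realType) (a K : R) : (forall t, 2 * t * a <= t ^+ 2 * K) -> a = 0.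
Proof.
move=> H.
pose s := `|K| + 1.
have s0 : 0 < s by rewrite /s ltr_wpDl.
have h := H (a / s).
have hK : K <= `|K| := ler_norm K.
have h2 : 2 * a ^+ 2 * s <= a ^+ 2 * K.
  have E1 : 2 * (a / s) * a = (2 * a ^+ 2 * s) / s ^+ 2 by field; rewrite gt_eqF.
  have E2 : (a / s) ^+ 2 * K = (a ^+ 2 * K) / s ^+ 2 by field; rewrite gt_eqF.
  by move: h; rewrite E1 E2 ler_pM2r // invr_gt0 exprn_gt0.
have a2 : 0 <= a ^+ 2 := sqr_ge0 a.
have : a ^+ 2 <= 0.
  have : a ^+ 2 * K <= a ^+ 2 * (s - 1) by rewrite /s addrK ler_wpM2l.
  nra.
move=> h3; apply/eqP; rewrite -sqrf_eq0 eq_le h3 a2 //.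
Qed.

Lemma R1 (R : realType) (c b N : R) :
  (forall t, (c + t * b) ^+ 2 <= c ^+ 2 * (1 + t ^+ 2 * N)) -> b = 0.
Proof.
move=> H.
have cb : c * b = 0.
  apply: (@R0 _ _ (c ^+ 2 * N - b ^+ 2)) => t.
  have := H t; nra.
have [c0|cn0] := eqVneq c 0.
  have := H 1; rewrite c0 expr0n /= mul0r add0r mul1r => h.
  by apply/eqP; rewrite -sqrf_eq0 eq_le h sqr_ge0.
by move/eqP: cb; rewrite mulf_eq0 (negbTE cn0) => /eqP.
Qed.

Section Core.
Variables (R : realType) (r d m1 m2 : nat) (A : 'M[R]_(m1, d)) (B : 'M[R]_(m2, d)).
Variables (u v : 'I_r -> 'cV[R]_d).
Hypothesis uA : forall i, ((u i)^T <= A)%MS.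
Hypothesis vB : forall i, ((v i)^T <= B)%MS.
Hypothesis uON : forall i j, dotc (u i) (u j) = (i == j)%:R.
Hypothesis vON : forall i j, dotc (v i) (v j) = (i == j)%:R.
Hypothesis Hmax : forall (i : 'I_r) (x y : 'cV[R]_d), (x^T <= A)%MS -> (y^T <= B)%MS ->
  (forall j : 'I_r, (j < i)%N -> dotc x (u j) = 0 /\ dotc y (v j) = 0) ->
  dotc x y ^+ 2 <= dotc (u i) (v i) ^+ 2 * dotc x x * dotc y y.

Lemma lin_sub m (M : 'M[R]_(m, d)) (x y : 'cV[R]_d) (t : R) :
  (x^T <= M)%MS -> (y^T <= M)%MS -> ((x + t *: y)^T <= M)%MS.
Proof.
by move=> hx hy; rewrite linearD /= linearZ /= addmx_sub // scalemx_sub.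
Qed.

Lemma core_prev (i j : 'I_r) : (j < i)%N -> dotc (u j) (v i) = 0.
Proof.
move=> ji.
apply: (@R1 _ (dotc (u j) (v j)) _ 1) => t.
have orth : forall k : 'I_r, (k < j)%N -> dotc (u j) (u k) = 0 /\ dotc (v j + t *: v i) (v k) = 0.
  move=> k kj; rewrite uON dotcDl dotcZl !vON.
  have -> : (j == k) = false by apply/negbTE; rewrite neq_ltn kj orbT.
  have -> : (i == k) = false by apply/negbTE; rewrite neq_ltn (ltn_trans kj ji) orbT.
  by rewrite mulr0 addr0.
have := @Hmax j (u j) (v j + t *: v i) (uA j) (lin_sub _ _ _ _ t (vB j) (vB i)) orth.
have ij : (i == j) = false by apply/negbTE; rewrite neq_ltn ji orbT.
have ji' : (j == i) = false by rewrite eq_sym.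
rewrite dotcDr dotcZr uON eqxx !dotcDl !dotcDr !dotcZl !dotcZr !vON eqxx ij ji' mulr1.
move=> h; apply: (le_trans h); rewrite eqxx /= le_eqVlt; apply/orP; left; apply/eqP; ring.
Qed.

Lemma sum_subA (P : pred 'I_r) (a : 'I_r -> R) :
  ((\sum_(j | P j) a j *: u j)^T <= A)%MS.
Proof.
rewrite linear_sum /=; apply: summx_sub => j _.
by rewrite linearZ /= scalemx_sub.
Qed.

Lemma perp_zero (i : 'I_r) (w : 'cV[R]_d) : (w^T <= A)%MS ->
  (forall k : 'I_r, (k <= i)%N -> dotc w (u k) = 0) -> dotc w (v i) = 0.
Proof.
move=> wA worth.
  apply: (@R1 _ (dotc (u i) (v i)) _ (dotc w w)) => t.
  have orth : forall k : 'I_r, (k < i)%N ->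
      dotc (u i + t *: w) (u k) = 0 /\ dotc (v i) (v k) = 0.
    move=> k ki; rewrite dotcDl dotcZl worth ?(ltnW ki) // uON vON.
    have -> : (i == k) = false by apply/negbTE; rewrite neq_ltn ki orbT.
    by rewrite mulr0 addr0.
  have := @Hmax i (u i + t *: w) (v i) (lin_sub _ _ _ _ t (uA i) wA) (vB i) orth.
  rewrite dotcDl dotcZl !dotcDl !dotcDr !dotcZl !dotcZr uON vON eqxx.
  rewrite (dotcC (u i) w) worth //.
  move=> h; apply: (le_trans h); rewrite /= le_eqVlt; apply/orP; left; apply/eqP; ring.
Qed.

Lemma core (i : 'I_r) (z : 'cV[R]_d) : (z^T <= A)%MS ->
  dotc z (v i) = dotc (u i) (v i) * dotc z (u i).
Proof.
move=> zA.
set S := \sum_(j : 'I_r | (j <= i)%N) dotc z (u j) *: u j.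
set w := z + (-1) *: S.
have wA : (w^T <= A)%MS by apply: lin_sub => //; apply: sum_subA.
have Su : forall k : 'I_r, (k <= i)%N -> dotc S (u k) = dotc z (u k).
  move=> k ki; rewrite /S dotc_suml (bigD1 k) //= big1 ?addr0.
    by rewrite dotcZl uON eqxx mulr1.
  move=> j /andP[_ jk]; by rewrite dotcZl uON (negbTE jk) mulr0.
have worth : forall k : 'I_r, (k <= i)%N -> dotc w (u k) = 0.
  by move=> k ki; rewrite /w dotcDl dotcZl Su // mulN1r subrr.
have b0 : dotc w (v i) = 0 by apply: perp_zero.
have -> : z = w + S by rewrite /w scaleN1r addrNK.
rewrite dotcDl b0 add0r dotcDl worth // add0r Su // mulrC.
rewrite /S dotc_suml (bigD1 i) //= big1 ?addr0.
  by rewrite dotcZl.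
move=> j /andP[ji jn]; rewrite dotcZl core_prev ?mulr0 //.
by rewrite ltn_neqAle jn ji.
Qed.

End Core.
Arguments core {R r d m1 m2 A B u v}.

Lemma vnorm_scale (R : realType) (d : nat) (x : 'cV[R]_d) :
  dotc x x != 0 -> vnorm ((vnorm x)^-1 *: x) = 1.
Proof.
move=> hx.
have p : 0 < dotc x x by rewrite lt0r hx dotc_ge0.
rewrite /vnorm dotcZl dotcZr -/(vnorm x) mulrA -expr2 exprVn /vnorm sqr_sqrtr ?dotc_ge0 //.
by rewrite mulVf // sqrtr1.
Qed.

Lemma scaleT_sub (R : realType) (d m : nat) (A : 'M[R]_(m, d)) (a : R) (x : 'cV[R]_d) :
  (x^T <= A)%MS -> ((a *: x)^T <= A)%MS.
Proof. by move=> h; rewrite linearZ /= scalemx_sub. Qed.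
Arguments scaleT_sub {R d m A} a {x}.

Lemma homog (R : realType) (d m1 m2 : nat) (A : 'M[R]_(m1, d)) (B : 'M[R]_(m2, d))
  (P : 'cV[R]_d -> 'cV[R]_d -> Prop) (K : R) :
  (forall a b x y, 0 < a -> 0 < b -> P x y -> P (a *: x) (b *: y)) ->
  (forall x y, (x^T <= A)%MS -> (y^T <= B)%MS -> vnorm x = 1 -> vnorm y = 1 ->
      P x y -> `|dotc x y| <= K) ->
  forall x y, (x^T <= A)%MS -> (y^T <= B)%MS -> P x y ->
    dotc x y ^+ 2 <= K ^+ 2 * dotc x x * dotc y y.
Proof.
move=> Pscale H x y xA yB Pxy.
have [x0|xn0] := eqVneq (dotc x x) 0.
  by rewrite (dotc_eq0 _ x0) dotc0l expr0n /= dotc0l mulr0 mul0r.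
have [y0|yn0] := eqVneq (dotc y y) 0.
  by rewrite (dotc_eq0 _ y0) dotc0r expr0n /= dotc0l mulr0.
have nxp : 0 < vnorm x by rewrite /vnorm sqrtr_gt0 lt0r xn0 dotc_ge0.
have nyp : 0 < vnorm y by rewrite /vnorm sqrtr_gt0 lt0r yn0 dotc_ge0.
have ix : 0 < (vnorm x)^-1 by rewrite invr_gt0.
have iy : 0 < (vnorm y)^-1 by rewrite invr_gt0.
have := H _ _ (scaleT_sub (vnorm x)^-1 xA) (scaleT_sub (vnorm y)^-1 yB)
  (vnorm_scale _ _ _ xn0) (vnorm_scale _ _ _ yn0)
  (Pscale _ _ _ _ ix iy Pxy).
rewrite dotcZl dotcZr !normrM (ger0_norm (ltW ix)) (ger0_norm (ltW iy)).
rewrite mulrA -invfM ler_pdivrMl ?mulr_gt0 // => h.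
have h2 : `|dotc x y| ^+ 2 <= (vnorm x * vnorm y * K) ^+ 2.
  by rewrite lerXn2r // ?nnegrE ?normr_ge0 //; apply: le_trans h.
move: h2; rewrite real_normK ?num_real // !exprMn /vnorm !sqr_sqrtr ?dotc_ge0 //.
by move=> h2; apply: (le_trans h2); rewrite le_eqVlt; apply/orP; left; apply/eqP; ring.
Qed.

Lemma proj_eq (R : realType) (m d : nat) (X : 'M[R]_(m, d)) (Xp : 'M[R]_(d, m))
  (u v : 'cV[R]_d) (c : R) : is_pinv X Xp -> (u^T <= X)%MS ->
  (forall z, (z^T <= X)%MS -> dotc z v = c * dotc z u) ->
  Xp *m X *m v = c *: u.
Proof.
move=> HX uX H.
set z := Xp *m X *m v - c *: u.
have zX : (z^T <= X)%MS.
  by rewrite /z linearB /= addmx_sub ?Q_in // ?eqmx_opp linearZ /= scalemx_sub.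
have Qz : Xp *m X *m z = z by exact: Q_fix.
have : dotc z z = 0.
  rewrite {2}/z dotcBr dotcZr -(Q_dot HX) Qz (H z zX) subrr //.
by move/dotc_eq0 => /eqP; rewrite subr_eq0 => /eqP.
Qed.

Section SpecChar.
Local Open Scope classical_set_scope.
Lemma specnorm_char (R : realType) (d : nat) (B : 'M[R]_d) (M : R) :
  0 <= M -> (forall x, dotc (B *m x) (B *m x) <= M * dotc x x) ->
  (exists x, dotc x x <= 1 /\ dotc (B *m x) (B *m x) = M) ->
  specnorm B ^+ 2 = M.
Proof.
move=> M0 Hub [x0 [hx0 hB0]].
set S := [set y | exists x : 'cV[R]_d, vnorm x <= 1 /\ y = vnorm (B *m x)].
have ub : ubound S (Num.sqrt M).
  move=> y [x [hx ->]]; rewrite /vnorm ler_sqrt //.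
  apply: (le_trans (Hub x)); rewrite -[leRHS]mulr1 ler_wpM2l //.
  by move: hx; rewrite /vnorm -{1}sqrtr1 ler_sqrt // ler01.
have inS : S (Num.sqrt M).
  exists x0; split; last by rewrite /vnorm hB0.
  by rewrite /vnorm -sqrtr1 ler_sqrt.
have -> : specnorm B = Num.sqrt M.
  rewrite /specnorm -/S; apply/eqP; rewrite eq_le; apply/andP; split.
    by apply: ge_sup => //; exists (Num.sqrt M).
  apply: sup_upper_bound => //; split; first by exists (Num.sqrt M).
  by exists (Num.sqrt M).
by rewrite sqr_sqrtr.
Qed.
End SpecChar.

Lemma dotc_mulmxG (R : realType) (p q : nat) (M : 'M[R]_(p, q)) (x : 'cV[R]_q) (y : 'cV[R]_p) :
  dotc (M *m x) y = dotc x (M^T *m y).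
Proof. by rewrite /dotc trmx_mul mulmxA. Qed.

Lemma bessel (R : realType) (d r : nat) (E : 'I_r -> 'cV[R]_d) (M : R) (x : 'cV[R]_d) :
  0 <= M -> (forall i, dotc (E i) (E i) <= M) ->
  (forall i j, i != j -> dotc (E i) (E j) = 0) ->
  dotc ((colsmx E)^T *m x) ((colsmx E)^T *m x) <= M * dotc x x.
Proof.
move=> M0 HM Horth.
set y := (colsmx E)^T *m x.
have e1 : dotc y y = dotc x (colsmx E *m y) by rewrite {1}/y dotc_mulmxG trmxK.
have e2' : forall y : 'cV[R]_r, dotc (colsmx E *m y) (colsmx E *m y) <= M * dotc y y.
  move=> {e1} {}y; rewrite dotc_mulmxG mulmxA colsmx_gram !dotcE mulr_sumr.
  apply: ler_sum => i _.
  rewrite !mxE (bigD1 i) //= big1 ?addr0; last first.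
    by move=> j ji; rewrite !mxE Horth 1?eq_sym // mul0r.
  have := HM i; have := sqr_ge0 (y i 0); rewrite !mxE expr2; nra.
have e2 := e2' y.
have cs := CS x (colsmx E *m y).
rewrite -e1 in cs.
have yy0 := dotc_ge0 y; have xx0 := dotc_ge0 x.
have h : dotc y y ^+ 2 <= dotc x x * (M * dotc y y).
  by apply: (le_trans cs); rewrite ler_wpM2l.
case: (ltrP 0 (dotc y y)) => [yp|yn].
  rewrite -(ler_pM2r yp); apply: (le_trans _ (le_trans h _)).
    by rewrite expr2.
  by rewrite le_eqVlt; apply/orP; left; apply/eqP; ring.
by apply: (le_trans yn); rewrite mulr_ge0.
Qed.

Lemma ON_of (R : realType) (d r : nat) (u : 'I_r -> 'cV[R]_d) :
  (forall i, dotc (u i) (u i) = 1) ->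
  (forall i j : 'I_r, (j < i)%N -> dotc (u i) (u j) = 0) ->
  forall i j, dotc (u i) (u j) = (i == j)%:R.
Proof.
move=> h1 h2 i j.
have [->|nij] := eqVneq i j; first by rewrite h1.
move: nij; rewrite neq_ltn => /orP[ij|ji].
- by rewrite dotcC h2.
- by rewrite h2.
Qed.

Theorem mainTheorem9 (R : realType) (n1 n2 d : nat)
  (X1 : 'M[R]_(n1, d)) (X2 : 'M[R]_(n2, d))
  (Xp1 : 'M[R]_(d, n1)) (Xp2 : 'M[R]_(d, n2)) :
  is_pinv X1 Xp1 -> is_pinv X2 Xp2 ->
  forall u v : 'I_(minn (\rank X1) (\rank X2)) -> 'cV[R]_d,
  principal_vectors X1 X2 u v ->
  forall n : nat, (1 <= n)%N ->
  let P1 := 1%:M - Xp1 *m X1 in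
  let P2 := 1%:M - Xp2 *m X2 in
  specnorm ((1%:M - P1) *m mxpow (P2 *m P1) n) ^+ 2 =
  \big[Num.max/0]_(i | 0 < principal_angle u v i)
     ((cos (principal_angle u v i) ^+ 2) ^+ (2 * n - 1)
      * (1 - cos (principal_angle u v i) ^+ 2)).
Proof.
move=> HX1 HX2 u v PV n hn P1 P2.
set r := minn (\rank X1) (\rank X2) in u v PV *.
have uX : forall i, ((u i)^T <= X1)%MS by move=> i; case: (PV i).
have vX : forall i, ((v i)^T <= X2)%MS by move=> i; case: (PV i).
have uON : forall i j, dotc (u i) (u j) = (i == j)%:R.
  apply: ON_of => [i|i j ji]; first by case: (PV i) => _ _ [h _] _ _; exact: vnorm1.
  by case: (PV i) => _ _ _ /(_ j ji) [].
have vON : forall i j, dotc (v i) (v j) = (i == j)%:R.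
  apply: ON_of => [i|i j ji]; first by case: (PV i) => _ _ [_ h] _ _; exact: vnorm1.
  by case: (PV i) => _ _ _ /(_ j ji) [].
set c := fun i => dotc (u i) (v i).
have Hmax : forall (i : 'I_r) (x y : 'cV[R]_d), (x^T <= X1)%MS -> (y^T <= X2)%MS ->
  (forall j : 'I_r, (j < i)%N -> dotc x (u j) = 0 /\ dotc y (v j) = 0) ->
  dotc x y ^+ 2 <= dotc (u i) (v i) ^+ 2 * dotc x x * dotc y y.
  move=> i x y xA yB Pxy.
  rewrite -[dotc (u i) (v i) ^+ 2]real_normK ?num_real //.
  apply: (@homog _ _ _ _ X1 X2 (fun x y => forall j : 'I_r, (j < i)%N -> dotc x (u j) = 0 /\ dotc y (v j) = 0)) => //.
    move=> a b x' y' _ _ h j ji; rewrite !dotcZl; have [-> ->] := h j ji.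
    by rewrite !mulr0.
  by move=> x' y' ? ? ? ? ?; case: (PV i) => _ _ _ _; apply.
have Hmax' : forall (i : 'I_r) (x y : 'cV[R]_d), (x^T <= X2)%MS -> (y^T <= X1)%MS ->
  (forall j : 'I_r, (j < i)%N -> dotc x (v j) = 0 /\ dotc y (u j) = 0) ->
  dotc x y ^+ 2 <= dotc (v i) (u i) ^+ 2 * dotc x x * dotc y y.
  move=> i x y xA yB Pxy; rewrite dotcC (dotcC (v i)) mulrAC.
  by apply: Hmax => // j ji; have [] := Pxy j ji.
have core1 := core uX vX uON vON Hmax.
have core2 := core vX uX vON uON Hmax'.
set Q1 := Xp1 *m X1 in P1 *.
set Q2 := Xp2 *m X2 in P2 *.
have Q1v : forall i, Q1 *m v i = c i *: u i.
  by move=> i; apply: (@proj_eq _ _ _ _ _ _ _ _ HX1 (uX i) (core1 i)).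
have Q2u : forall i, Q2 *m u i = c i *: v i.
  by move=> i; rewrite /c dotcC; apply: (@proj_eq _ _ _ _ _ _ _ _ HX2 (vX i) (core2 i)).
have Q1u : forall i, Q1 *m u i = u i by move=> i; apply: (Q_fix HX1 _ (uX i)).
have Q2v : forall i, Q2 *m v i = v i by move=> i; apply: (Q_fix HX2 _ (vX i)).
have cross : forall i j, i != j -> dotc (u i) (v j) = 0.
  by move=> i j ij; rewrite (core1 j (u i) (uX i)) uON (negbTE ij) mulr0.
set a := fun i => v i - c i *: u i.
have P1v : forall i, P1 *m v i = a i by move=> i; rewrite /P1 mulmxBl mul1mx Q1v.
have P1u : forall i, P1 *m u i = 0 by move=> i; rewrite /P1 mulmxBl mul1mx Q1u subrr.
have P2u : forall i, P2 *m u i = u i - c i *: v i by move=> i; rewrite /P2 mulmxBl mul1mx Q2u.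
have P2v : forall i, P2 *m v i = 0 by move=> i; rewrite /P2 mulmxBl mul1mx Q2v subrr.
have P12a : forall i, P1 *m (P2 *m a i) = c i ^+ 2 *: a i.
  move=> i; rewrite /a /= (mulmxBr P2 (v i) (c i *: u i)) P2v -scalemxAr P2u sub0r.
  rewrite (mulmxN P1) -scalemxAr (mulmxBr P1 (u i) (c i *: v i)) P1u -scalemxAr P1v sub0r.
  by rewrite scalerN opprK scalerA expr2.
have P1T : P1^T = P1 by rewrite /P1 linearB /= trmx1 (Q_sym HX1).
have P2T : P2^T = P2 by rewrite /P2 linearB /= trmx1 (Q_sym HX2).
have rowstep : forall i, (a i)^T *m (P2 *m P1) = c i ^+ 2 *: (a i)^T.
  move=> i; apply: trmx_inj.
  by rewrite !trmx_mul trmxK P1T P2T -mulmxA P12a linearZ /= trmxK.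
have rowpow : forall i k, (a i)^T *m mxpow (P2 *m P1) k = (c i ^+ 2) ^+ k *: (a i)^T.
  move=> i; elim=> [|k IH]; first by rewrite /mxpow /= mulmx1 expr0 scale1r.
  rewrite /mxpow iterS -/(mxpow _ k) mulmxA rowstep -scalemxAl IH scalerA -exprS.
  by [].
set Um := colsmx u.
set Vm := colsmx v.
set Cm := colsmx (fun i => c i *: v i).
have Q1Q2 : Q1 *m Q2 = Um *m Cm^T.
  case: (leqP (\rank X1) (\rank X2)) => h.
    have rX : (\rank X1 <= r)%N by rewrite /r (minn_idPl h).
    rewrite /Q1 (@span_proj _ _ _ _ _ _ _ HX1 rX uX uON) -mulmxA; congr (_ *m _).
    apply: trmx_inj; rewrite trmx_mul trmxK (Q_sym HX2) colsmx_mull.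
    by rewrite trmxK /Cm; congr colsmx; apply/funext => i; rewrite -/Q2 Q2u.
  have rX : (\rank X2 <= r)%N by rewrite /r (minn_idPr (ltnW h)).
  rewrite /Q2 (@span_proj _ _ _ _ _ _ _ HX2 rX vX vON) mulmxA colsmx_mull !colsmx_outer.
  apply: eq_bigr => i _ /=; rewrite Q1v linearZ /= -scalemxAl -scalemxAr.
  by [].
set s := fun i => c i * (c i ^+ 2) ^+ n.-1.
set e := fun i => s i *: a i.
set Em := colsmx e.
have QPP : Q1 *m (P2 *m P1) = - (Q1 *m Q2 *m P1).
  rewrite mulmxA /P2 (mulmxBr Q1 1%:M Q2) mulmx1 mulmxBl.
  have -> : Q1 *m P1 = 0 by rewrite /P1 (mulmxBr Q1 1%:M Q1) mulmx1 (Q_idem HX1) subrr.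
  by rewrite sub0r.
have CPE : Cm^T *m P1 *m mxpow (P2 *m P1) n.-1 = Em^T.
  apply/row_matrixP => i; rewrite !row_mul !row_colsmxT /= linearZ /= -scalemxAl.
  have -> : (v i)^T *m P1 = (a i)^T.
    by apply: trmx_inj; rewrite trmx_mul !trmxK P1T P1v.
  by rewrite -scalemxAl rowpow scalerA /e /= linearZ.
have Bform : (1%:M - P1) *m mxpow (P2 *m P1) n = - (Um *m Em^T).
  have -> : 1%:M - P1 = Q1 by rewrite /P1 opprB addrC subrK.
  rewrite -(prednK hn) {1}/mxpow iterS -/(mxpow _ n.-1) mulmxA QPP Q1Q2.
  by rewrite mulNmx -!mulmxA (mulmxA Cm^T) CPE.
have UmG : Um^T *m Um = 1%:M.
  by rewrite colsmx_gram; apply/matrixP => i k; rewrite !mxE uON.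
have Bnorm : forall x, dotc (((1%:M - P1) *m mxpow (P2 *m P1) n) *m x)
    (((1%:M - P1) *m mxpow (P2 *m P1) n) *m x) = dotc (Em^T *m x) (Em^T *m x).
  move=> x; rewrite Bform mulNmx dotcNl dotcC dotcNl opprK -mulmxA (dotc_mulmxG _ _ _ Um).
  by rewrite (mulmxA Um^T) UmG mul1mx.
have aa : forall i, dotc (a i) (a i) = 1 - c i ^+ 2.
  move=> i; rewrite /a /= dotcBl !dotcBr !dotcZl !dotcZr uON vON eqxx (dotcC (v i)) -/(c i).
  by rewrite /=; ring.
have aorth : forall i j, i != j -> dotc (a i) (a j) = 0.
  move=> i j ij; rewrite /a /= dotcBl !dotcBr !dotcZl !dotcZr uON vON (negbTE ij).
  rewrite (dotcC (v i)) !cross // 1?eq_sym //.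
  by rewrite /=; ring.
set g := fun i => (c i ^+ 2) ^+ (2 * n - 1) * (1 - c i ^+ 2).
have n21 : (2 * n - 1)%N = (n.-1 + n.-1).+1.
  by rewrite -(prednK hn); lia.
have ee : forall i, dotc (e i) (e i) = g i.
  move=> i; rewrite /e /= dotcZl dotcZr aa /g /s /= n21. rewrite (exprS (c i ^+ 2)) (exprD (c i ^+ 2)).
  ring.
have eorth : forall i j, i != j -> dotc (e i) (e j) = 0.
  by move=> i j ij; rewrite /e /= dotcZl dotcZr aorth // !mulr0.
have cb : forall i, c i ^+ 2 <= 1.
  move=> i; have := CS (u i) (v i); rewrite uON vON eqxx mulr1 //.
have cnb : forall i, `|c i| <= 1.
  move=> i; have := cb i; rewrite -real_normK ?num_real //.
  have := normr_ge0 (c i); nra.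
have cosang : forall i, cos (principal_angle u v i) = `|c i|.
  move=> i; rewrite /principal_angle acosK // in_itv /= cnb andbT.
  by apply: (le_trans _ (normr_ge0 _)); rewrite lerN10.
have fg : forall i, (cos (principal_angle u v i) ^+ 2) ^+ (2 * n - 1)
      * (1 - cos (principal_angle u v i) ^+ 2) = g i.
  by move=> i; rewrite cosang real_normK ?num_real.
have ang0 : forall i, ~~ (0 < principal_angle u v i) -> c i ^+ 2 = 1.
  move=> i; rewrite -leNgt => h.
  have h0 : principal_angle u v i = 0.
    apply/eqP; rewrite eq_le h /principal_angle acos_ge0 // cnb andbT.
    by apply: (le_trans _ (normr_ge0 _)); rewrite lerN10.
  have := cosang i; rewrite h0 cos0 => h1.
  by rewrite -real_normK ?num_real // -h1 expr1n.
set M := \big[Num.max/0]_(i | 0 < principal_angle u v i) _.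
have Mprop : 0 <= M /\ (M = 0 \/ exists2 i, 0 < principal_angle u v i & M = g i).
  rewrite /M; apply: (big_ind (fun y => 0 <= y /\ (y = 0 \/ exists2 i, 0 < principal_angle u v i & y = g i))).
  - by split => //; left.
  - move=> x y [x0 hx] [y0 hy]; rewrite maxEle; case: ifP => _; by split.
  - move=> i hi; rewrite fg; split; last by right; exists i.
    by rewrite /g mulr_ge0 ?subr_ge0 ?cb // exprn_ge0 // sqr_ge0.
have Mub : forall i, g i <= M.
  move=> i; case: (boolP (0 < principal_angle u v i)) => hi.
    by rewrite -fg /M (le_bigmax_cond _ _ hi).
  by rewrite /g ang0 // subrr mulr0; case: Mprop.
apply: specnorm_char.
- by case: Mprop.
- move=> x; rewrite Bnorm; apply: bessel => //; first by case: Mprop.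
  by move=> i; rewrite ee.
case: Mprop => _ [M0|[i hi Mi]].
  by exists 0; rewrite mulmx0 dotc0l M0 ler01.
have c1 : c i ^+ 2 < 1.
  rewrite lt_neqAle cb andbT; apply/negP => /eqP h.
  move: hi; rewrite /principal_angle.
  have -> : `|c i| = 1.
    by apply/eqP; rewrite -sqr_norm_eq1 h.
  by rewrite acos1 ltxx.
have q0 : 0 < 1 - c i ^+ 2 by rewrite subr_gt0.
set k := (Num.sqrt (1 - c i ^+ 2))^-1.
have k2 : k ^+ 2 = (1 - c i ^+ 2)^-1 by rewrite /k exprVn sqr_sqrtr // ltW.
exists (k *: a i); split.
  by rewrite dotcZl dotcZr aa mulrA -expr2 k2 mulVf // gt_eqF.
rewrite Bnorm -scalemxAr dotcZl dotcZr colsmx_trmul.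
have -> : dotc (\col_j dotc (e j) (a i)) (\col_j dotc (e j) (a i)) = (s i * (1 - c i ^+ 2)) ^+ 2.
  rewrite dotcE (bigD1 i) //= big1 ?addr0.
    by rewrite !mxE /e /= dotcZl aa expr2.
  by move=> j ji; rewrite !mxE /e /= dotcZl aorth // mulr0 mul0r.
rewrite Mi mulrA -expr2 k2 -ee /e /= dotcZl dotcZr aa.
field; by rewrite gt_eqF.
Qed.
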